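(* Let $\mathcal{P}$ be a poset and $S\subseteq\mathcal{P}$ a finitely presented convex set. Then $\min S$ and $\operatorname{cover}S$ are finite, and $S=\uparrow\min S\setminus\uparrow\operatorname{cover}S$.
   Context: Fix a field $\mathbb{k}$. $\uparrow X=\{p:\exists x\in X,x\le p\}$; $\operatorname{cover}X=\min(\uparrow X\setminus X)$. $S$ is convex if $s\le p\le s'$ with $s,s'\in S$ implies $p\in S$. $\mathbb{k}_S$ is the indicator representation ($\mathbb{k}$ on $S$, $0$ elsewhere, identity maps within $S$). $S$ is finitely presented if $\mathbb{k}_S$ is the cokernel of a morphism between finite direct sums of representations $\mathbb{k}_{\uparrow\{p\}}$, $p\in\mathcal{P}$. *)

(* Defs.v *)
From HB Require Import structures.
From mathcomp Require Import all_boot all_order all_algebra.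
From mathcomp Require Import boolp classical_sets cardinality.
Unset Implicit Arguments. Unset Printing Implicit Defensive.
Import Order.Theory GRing.Theory.
Local Open Scope classical_set_scope.
Local Open Scope ring_scope.

Section PosetReps.
Variables (k : fieldType) (d : Order.disp_t) (P : porderType d).

Definition pupset (X : set P) : set P :=
  [set p | exists2 x, X x & (x <= p)%O].
Definition pminset (X : set P) : set P :=
  [set x | X x /\ forall y, X y -> (y <= x)%O -> y = x].
Definition pcoverset (X : set P) : set P := pminset (pupset X `\` X).
Definition pconvex (S : set P) : Prop :=
  forall s s' p, S s -> S s' -> (s <= p)%O -> (p <= s')%O -> S p.

(* The direct sum  (+)_{i < size a} k_{up a_i}  is realised at the point p
   as the subspace of k^(size a) (row vectors) of vectors supported on the
   indices i with a_i <= p; its structure maps are the inclusions. *)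
Definition fsupp (a : seq P) (p : P) (v : 'rV[k]_(size a)) : Prop :=
  forall i : 'I_(size a), ~~ (nth p a i <= p)%O -> v 0 i = 0.

(* A morphism (+)_i k_{up a_i} -> (+)_j k_{up b_j}: a family of linear maps
   (given by matrices, acting on the right) preserving the subspaces and
   natural w.r.t. the (inclusion) structure maps. *)
Definition free_morph (a b : seq P) (f : P -> 'M[k]_(size a, size b)) : Prop :=
  (forall p v, fsupp a p v -> fsupp b p (v *m f p)) /\
  (forall p q v, (p <= q)%O -> fsupp a p v -> v *m f q = v *m f p).

(* A morphism (+)_j k_{up b_j} -> k_S, where k_S is k on S (identity maps)
   and 0 elsewhere; the component at p is pi p (only meaningful for p in S). *)
Definition morph_to_ind (S : set P) (b : seq P) (pi : P -> 'M[k]_(size b, 1)) :=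
  forall p q v, (p <= q)%O -> S q -> fsupp b p v ->
    (S p -> v *m pi q = v *m pi p) /\ (~ S p -> v *m pi q = 0).

(* pi exhibits k_S as the cokernel of f: the sequence
   F_a --f--> F_b --pi--> k_S --> 0 is exact (pointwise). *)
Definition is_coker_ind (S : set P) (a b : seq P)
    (f : P -> 'M[k]_(size a, size b)) (pi : P -> 'M[k]_(size b, 1)) : Prop :=
  [/\ morph_to_ind S b pi,
      (forall p, S p -> exists v, fsupp b p v /\ v *m pi p != 0) &
      (forall p v, fsupp b p v ->
         ((S p -> v *m pi p = 0) <-> exists u, fsupp a p u /\ v = u *m f p))].

Definition finitely_presented (S : set P) : Prop :=
  exists (a b : seq P) (f : P -> 'M[k]_(size a, size b))
         (pi : P -> 'M[k]_(size b, 1)),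
    free_morph a b f /\ is_coker_ind S a b f pi.

End PosetReps.

Arguments pupset {d P}.
Arguments pminset {d P}.
Arguments pcoverset {d P}.
Arguments pconvex {d P}.
Arguments finitely_presented k {d P}.

(* Main.v *)
Require Import Defs.
From HB Require Import structures.
From mathcomp Require Import all_boot all_order all_algebra.
From mathcomp Require Import boolp classical_sets cardinality.
Local Open Scope classical_set_scope.
Import Order.Theory GRing.Theory.

Lemma count_lt (T : eqType) (a b : pred T) (l : seq T) z :
  subpred a b -> z \in l -> b z -> ~~ a z -> (count a l < count b l)%N.
Proof.
move=> sab; elim: l => // h t IH; rewrite inE => /orP[/eqP->|zt] bz naz /=.
  by rewrite bz (negbTE naz) add0n add1n ltnS sub_count.
have := IH zt bz naz; have : a h <= b h.
  by case ah: (a h) => //; rewrite (sab _ ah).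
by move=> H1 H2; rewrite -addnS leq_add.
Qed.

Lemma gen_min d (P : porderType d) (l : seq P) (Q : set P) :
  (forall x, Q x -> exists2 y, y \in l & Q y /\ (y <= x)%O) ->
  (forall x, Q x -> exists2 m, pminset Q m & (m <= x)%O) /\
  (pminset Q `<=` [set` l]).
Proof.
move=> H; split; last first.
  move=> m [Qm Hm]; have [y yl [Qy ym]] := H m Qm.
  by rewrite /= -(Hm y Qy ym).
pose mu (x : P) := count (fun z => asbool (Q z) && (z <= x)%O) l.
suff K : forall n x, Q x -> x \in l -> mu x <= n -> exists2 m, pminset Q m & (m <= x)%O.
  move=> x Qx; have [y yl [Qy yx]] := H x Qx.
  have [m mm my] := K _ y Qy yl (leqnn _).
  by exists m => //; apply: le_trans my yx.
elim=> [|n IH] x Qx xl hmu.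
- exfalso; suff: 0 < mu x by rewrite lt0n; move: hmu; rewrite leqn0 => ->.
  rewrite -has_count; apply/hasP.
  by exists x => //; rewrite /= (asboolT Qx) lexx.
- have [Hmin|Hnot] := pselect (forall y, Q y -> (y <= x)%O -> y = x).
    by exists x => //; split.
  have [y /not_implyP [Qy /not_implyP [yx yne]]] := (existsNP _).2 Hnot.
  have [y' y'l [Qy' y'y]] := H y Qy.
  have y'x : (y' <= x)%O := le_trans y'y yx.
  have hl : mu y' <= n.
    rewrite -ltnS; apply: leq_trans hmu; apply: (@count_lt _ _ _ _ x) => //.
    + move=> z /andP[qz zy']; rewrite qz /=; exact: le_trans zy' y'x.
    + by rewrite (asboolT Qx) lexx.
    + apply/negP => /andP[_ xy']; apply: yne; apply: le_anti.
      by rewrite yx (le_trans xy' y'y).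
  have [m mm my'] := IH y' Qy' y'l hl.
  by exists m => //; apply: le_trans my' y'x.
Qed.
Local Open Scope ring_scope.
Section LA.
Variables (k : fieldType) (d : Order.disp_t) (P : porderType d) (S : set P).
Variables (a b : seq P) (f : P -> 'M[k]_(size a, size b))
  (pi : P -> 'M[k]_(size b, 1)).
Hypotheses (Hf : free_morph k d P a b f) (Hc : is_coker_ind k d P S a b f pi).

Definition bt (i : 'I_(size b)) := tnth (in_tuple b) i.
Definition at_ (j : 'I_(size a)) := tnth (in_tuple a) j.

Lemma fsupp_delta (l : seq P) (i : 'I_(size l)) p :
  (tnth (in_tuple l) i <= p)%O -> fsupp k d P l p (delta_mx 0 i).
Proof.
move=> hi j hj; rewrite mxE eqxx /=; case: eqP => [e|//]; subst j.
by rewrite -(tnth_nth p (in_tuple l)) hi in hj.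
Qed.

Lemma fsupp_le (l : seq P) p (v : 'rV[k]_(size l)) i :
  fsupp k d P l p v -> v 0 i != 0 -> (tnth (in_tuple l) i <= p)%O.
Proof.
move=> hv; apply: contraR => h; rewrite (hv i) //.
by rewrite -(tnth_nth p (in_tuple l)).
Qed.

Arguments fsupp_le {l p v i}.
Arguments fsupp_delta {l i p}.

Definition Psi : 'M[k]_(size b, 1) :=
  \matrix_(i, j) (if pselect (S (bt i)) is left _ then pi (bt i) i 0 else 0).

Lemma row_entry m n (M : 'M[k]_(m, n)) (i : 'I_m) j : (delta_mx (0 : 'I_1) i *m M) 0 j = M i j.
Proof. by rewrite -rowE mxE. Qed.

Lemma Psi_eq p v : S p -> fsupp k d P b p v -> v *m pi p = v *m Psi.
Proof.
move=> Sp hv; apply/matrixP => x y; rewrite !ord1 !mxE; apply: eq_bigr => i _.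
have [->|nz] := eqVneq (v 0 i) 0; first by rewrite !mul0r.
have hi := fsupp_le hv nz; congr (_ * _); rewrite mxE.
have [Hm _ _] := Hc.
have [H1 H2] := Hm (bt i) p (delta_mx 0 i) hi Sp (fsupp_delta (lexx _)).
case: pselect => [Sb|nSb].
  by have := congr1 (fun M : 'M[k]_1 => M 0 0) (H1 Sb); rewrite !row_entry.
by have := congr1 (fun M : 'M[k]_1 => M 0 0) (H2 nSb); rewrite !row_entry mxE.
Qed.

Arguments Psi_eq {p v}.

Lemma C1 s : S s -> exists i, [/\ S (bt i), (bt i <= s)%O & Psi i 0 != 0].
Proof.
move=> Ss; have [_ Hnz _] := Hc; have [v [hv nz]] := Hnz s Ss.
rewrite (Psi_eq Ss hv) in nz.
have [i Hi] : exists i, v 0 i * Psi i 0 != 0.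
  apply: contrapT => H; move/negP: nz; apply; apply/eqP/matrixP => x y; rewrite !ord1 !mxE.
  apply: big1 => i _; apply/eqP; apply: contrapT => h; apply: H; exists i; exact/negP.
have vnz : v 0 i != 0 by apply: contraNneq Hi => ->; rewrite mul0r.
have pnz : Psi i 0 != 0 by apply: contraNneq Hi => ->; rewrite mulr0.
exists i; split => //; last exact: fsupp_le hv vnz.
by move: pnz; rewrite mxE; case: pselect => // _; rewrite eqxx.
Qed.

Arguments C1 {s}.

Lemma C2 c : pupset S c -> ~ S c ->
  exists j, [/\ (at_ j <= c)%O, pupset S (at_ j) & ~ S (at_ j)].
Proof.
move=> [s Ss sc] nSc; have [i [Sbi bis nz]] := C1 Ss.
have [_ _ Hex] := Hc; have [Hf1 Hf2] := Hf.
have hv := @fsupp_delta b i c (le_trans bis sc).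
have [Hto _] := Hex c _ hv.
have [u [hu ev]] := Hto (fun h => False_ind _ (nSc h)).
apply: contrapT => H; move/eqP: nz; apply.
rewrite -(@row_entry _ _ Psi i 0) ev -mulmxA mxE.
apply: big1 => j _.
have [->|unz] := eqVneq (u 0 j) 0; first by rewrite mul0r.
have ajc := fsupp_le hu unz.
rewrite -(@row_entry _ _ (f c *m Psi) j 0) mulmxA.
have hdj := @fsupp_delta a j _ (lexx (at_ j)).
rewrite (Hf2 _ _ _ ajc hdj).
have hw := Hf1 _ _ hdj.
case: (pselect (S (at_ j))) => [Saj|nSaj].
  have [_ H0] := Hex _ _ hw; have {}H0 := H0 (ex_intro _ _ (conj hdj erefl)).
  by rewrite -(Psi_eq Saj hw) (H0 Saj) mxE mulr0.
have nup : ~ pupset S (at_ j) by move=> hup; apply: H; exists j.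
suff -> : (delta_mx (0 : 'I_1) j *m f (at_ j) *m Psi) 0 0 = 0 by rewrite mulr0.
rewrite mxE; apply: big1 => i' _.
have [->|wnz] := eqVneq ((delta_mx (0 : 'I_1) j *m f (at_ j)) 0 i') 0; first by rewrite mul0r.
have bi' := fsupp_le hw wnz.
rewrite [Psi i' 0]mxE; case: pselect => [Sb|_]; last by rewrite mulr0.
by exfalso; apply: nup; exists (bt i').
Qed.

End LA.

Theorem mainTheorem17 (k : fieldType) (d : Order.disp_t) (P : porderType d)
    (S : set P) :
  pconvex S -> finitely_presented k S ->
  [/\ finite_set (pminset S), finite_set (pcoverset S) &
      S = pupset (pminset S) `\` pupset (pcoverset S)].
Proof.
move=> conv [a [b [f [pi [Hf Hc]]]]].
have [G1a G1b] := gen_min d P b S (fun x Sx =>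
  let: ex_intro i (And3 Sb bx _) := @C1 k d P S a b f pi Hc x Sx in
  ex_intro2 _ _ (bt d P b i) (mem_tnth i (in_tuple b)) (conj Sb bx)).
have [G2a G2b] : _ := gen_min d P a (pupset S `\` S) (fun x '(conj ux nx) =>
  let: ex_intro j (And3 jx uj nj) := C2 k d P S a b f pi Hf Hc x ux nx in
  ex_intro2 _ _ (at_ d P a j) (mem_tnth j (in_tuple a)) (conj (conj uj nj) jx)).
split.
- exact: sub_finite_set G1b (finite_seq b).
- exact: sub_finite_set G2b (finite_seq a).
apply/seteqP; split.
- move=> s Ss; split; first exact: G1a.
  move=> [c [[[s0 Ss0 s0c] nSc] _] cs]; apply: nSc.
  exact: conv s0 s c Ss0 Ss s0c cs.
- move=> p [[m [Sm _] mp] ncov]; apply: contrapT => nSp; apply: ncov.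
  have [c cm cp] := G2a p (conj (ex_intro2 _ _ m Sm mp) nSp).
  by exists c.
Qed.
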